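(* Let $X$ be a topological space and $f\colon X\to\mathbb{R}^d$ an injective function. Suppose there exists a continuous map $\psi\colon S^1\to X$ such that $\psi(x)\neq\psi(-x)$ for all $x\in S^1$. Then $\alpha(f)=0$ if and only if $f$ is continuous.
   Context: $\mathrm{Conf}_2(X)=\{(x,y)\in X\times X: x\neq y\}$ with the subspace topology. $S^{d-1}$ carries the geodesic metric $d(u,v)=\arccos\langle u,v\rangle$ (for $d=1$, $S^0=\{\pm1\}$ with the two points at distance $\pi$). For a topological space $X$ and a metric space $Y$, $\delta(g)=\inf\{\delta\ge 0 : \text{for every } x\in X \text{ there is an open neighborhood } U_x \text{ of } x \text{ with } \operatorname{diam}(g(U_x))\le\delta\}$. For injective $f\colon X\to\mathbb{R}^d$, $\Phi_f(x,y)=\frac{f(x)-f(y)}{\|f(x)-f(y)\|}$ and $\alpha(f)=\delta(\Phi_f)$. *)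

(* Defs.v *)
From HB Require Import structures.
From mathcomp Require Import all_boot all_order all_algebra.
From mathcomp Require Import all_classical all_reals all_analysis.
Set Implicit Arguments. Unset Strict Implicit. Unset Printing Implicit Defensive.
Import Order.TTheory GRing.Theory Num.Theory.
Import numFieldNormedType.Exports.
Local Open Scope classical_set_scope.
Local Open Scope ring_scope.

(* R^d is modelled as row vectors 'rV[R]_d (its canonical topology is the
   product/Euclidean topology). Euclidean inner product and norm: *)
Definition edot {R : realType} {d : nat} (u v : 'rV[R]_d) : R :=
  \sum_(i < d) u 0 i * v 0 i.
Definition enorm {R : realType} {d : nat} (u : 'rV[R]_d) : R :=
  Num.sqrt (edot u u).

Definition sphere (R : realType) (d : nat) : set 'rV[R]_d :=
  [set u | enorm u = 1].
Arguments sphere R d : clear implicits.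

Definition geod {R : realType} {d : nat} (u v : 'rV[R]_d) : R :=
  acos (edot u v).

Definition gdiam {R : realType} {Y : Type} (dist : Y -> Y -> R) (B : set Y)
  : \bar R :=
  ereal_sup [set (dist a b)%:E | a in B & b in B].

(* delta(g) for g defined on the subspace A of the topological space T
   (subspace topology: open neighbourhoods of x in A are U `&` A with
   U open in T and x in U) with values in a metric space (Y, dist). *)
Definition delta_sub {R : realType} {T : topologicalType} {Y : Type}
  (dist : Y -> Y -> R) (A : set T) (g : T -> Y) : \bar R :=
  ereal_inf [set e%:E | e in [set e : R | 0 <= e /\
     forall x, A x -> exists U : set T,
       [/\ open U, U x & (gdiam dist (g @` (U `&` A)) <= e%:E)%E]]].

Definition Conf2 (X : topologicalType) : set (X * X) :=
  [set p | p.1 <> p.2].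
Arguments Conf2 X : clear implicits.

Definition Phi {R : realType} {X : Type} {d : nat} (f : X -> 'rV[R]_d)
  (p : X * X) : 'rV[R]_d :=
  (enorm (f p.1 - f p.2))^-1 *: (f p.1 - f p.2).

Definition alpha {R : realType} {X : topologicalType} {d : nat}
  (f : X -> 'rV[R]_d) : \bar R :=
  delta_sub geod (Conf2 X) (Phi f).

(* Main.v *)
Require Import Defs.
From HB Require Import structures.
From mathcomp Require Import all_boot all_order all_algebra.
From mathcomp Require Import all_classical all_reals all_analysis.
From mathcomp Require Import ring lra.
Set Implicit Arguments. Unset Strict Implicit. Unset Printing Implicit Defensive.
Import Order.TTheory GRing.Theory Num.Theory.
Import numFieldNormedType.Exports.
Local Open Scope classical_set_scope.
Local Open Scope ring_scope.


Section Edot.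
Variables (R : realType) (d : nat).
Implicit Types (u v w : 'rV[R]_d) (k : R).

Lemma edotC u v : edot u v = edot v u.
Proof. by rewrite /edot; apply: eq_bigr => i _; rewrite mulrC. Qed.
Lemma edotDl u v w : edot (u + v) w = edot u w + edot v w.
Proof. by rewrite /edot -big_split; apply: eq_bigr => i _; rewrite mxE mulrDl. Qed.
Lemma edotZl k u v : edot (k *: u) v = k * edot u v.
Proof. by rewrite /edot mulr_sumr; apply: eq_bigr => i _; rewrite mxE mulrA. Qed.
Lemma edotNl u v : edot (- u) v = - edot u v.
Proof. by rewrite -scaleN1r edotZl mulN1r. Qed.
Lemma edotBl u v w : edot (u - v) w = edot u w - edot v w.
Proof. by rewrite edotDl edotNl. Qed.
Lemma edotDr u v w : edot w (u + v) = edot w u + edot w v.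
Proof. by rewrite edotC edotDl !(edotC w). Qed.
Lemma edotZr k u v : edot v (k *: u) = k * edot v u.
Proof. by rewrite edotC edotZl edotC. Qed.
Lemma edotNr u v : edot v (- u) = - edot v u.
Proof. by rewrite edotC edotNl edotC. Qed.
Lemma edotBr u v w : edot w (u - v) = edot w u - edot w v.
Proof. by rewrite edotDr edotNr. Qed.
Lemma edot0l u : edot 0 u = 0.
Proof. by rewrite -(scale0r 0) edotZl mul0r. Qed.
Lemma edot_ge0 u : 0 <= edot u u.
Proof. by rewrite /edot; apply: sumr_ge0 => i _; rewrite -expr2 sqr_ge0. Qed.
Lemma edot_eq0 u : edot u u = 0 -> u = 0.
Proof.
move=> /eqP; rewrite /edot psumr_eq0; last by move=> i _; rewrite -expr2 sqr_ge0.
move=> /allP H; apply/rowP => i; rewrite mxE.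
by have /(_ (mem_index_enum i)) := H i; rewrite -expr2 sqrf_eq0 => /eqP.
Qed.
Lemma entry_le u i : u 0 i ^+ 2 <= edot u u.
Proof.
rewrite /edot (bigD1 i) //= -expr2 lerDl; apply: sumr_ge0 => j _.
by rewrite -expr2 sqr_ge0.
Qed.
Lemma enorm_ge0 u : 0 <= enorm u.
Proof. exact: sqrtr_ge0. Qed.
Lemma enorm_sq u : enorm u ^+ 2 = edot u u.
Proof. by rewrite /enorm sqr_sqrtr // edot_ge0. Qed.
Lemma enorm_eq0 u : enorm u = 0 -> u = 0.
Proof. by move=> h; apply: edot_eq0; rewrite -enorm_sq h expr0n. Qed.
Lemma enormN u : enorm (- u) = enorm u.
Proof. by rewrite /enorm edotNl edotNr opprK. Qed.
Lemma enormZ k u : enorm (k *: u) = `|k| * enorm u.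
Proof.
by rewrite /enorm edotZl edotZr mulrA -expr2 sqrtrM ?sqr_ge0 // sqrtr_sqr.
Qed.
Lemma normalize_scale u : u = enorm u *: ((enorm u)^-1 *: u).
Proof.
have [/enorm_eq0 ->|h] := eqVneq (enorm u) 0; first by rewrite !scaler0.
by rewrite scalerA divff // scale1r.
Qed.
Lemma normalize_unit u : u != 0 ->
  edot ((enorm u)^-1 *: u) ((enorm u)^-1 *: u) = 1.
Proof.
move=> u0; have h : enorm u != 0 by apply: contra u0 => /eqP/enorm_eq0 ->.
rewrite edotZl edotZr mulrA -expr2 -enorm_sq -exprMn mulVf //.
by rewrite expr1n.
Qed.
Lemma edot_add_le u v : edot (u + v) (u + v) <= 2 * edot u u + 2 * edot v v.
Proof.
have := edot_ge0 (u - v).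
rewrite !(edotDl, edotDr, edotNl, edotNr) (edotC v u); lra.
Qed.
Lemma edot_sub_le u v : edot (u - v) (u - v) <= 2 * edot u u + 2 * edot v v.
Proof. by have := edot_add_le u (- v); rewrite edotNl edotNr opprK. Qed.
Lemma edot_unit_bound u v : edot u u = 1 -> edot v v = 1 ->
  -1 <= edot u v <= 1.
Proof.
move=> hu hv; have h1 := edot_ge0 (u - v); have h2 := edot_ge0 (u + v).
move: h1 h2; rewrite !(edotDl, edotDr, edotNl, edotNr) (edotC v u) hu hv.
move=> h1 h2; apply/andP; split; lra.
Qed.
Lemma edot_unit_dist u v : edot u u = 1 -> edot v v = 1 ->
  edot (u - v) (u - v) = 2 - 2 * edot u v.
Proof.
move=> hu hv; rewrite !(edotDl, edotDr, edotNl, edotNr) (edotC v u) hu hv; lra.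
Qed.
End Edot.


Lemma cross_le (R : realType) (al be c : R) : `|c| < 1 ->
  (1 - `|c|) * (al ^+ 2 + be ^+ 2) <= al ^+ 2 + be ^+ 2 - 2 * al * be * c.
Proof.
move=> hc.
have h1 : al * be * c <= `|al| * `|be| * `|c|.
  by rewrite -!normrM; apply: ler_norm.
have h2 : 0 <= `|c| * (`|al| - `|be|) ^+ 2 by rewrite mulr_ge0 ?sqr_ge0.
have ea : `|al| ^+ 2 = al ^+ 2 by rewrite real_normK // num_real.
have eb : `|be| ^+ 2 = be ^+ 2 by rewrite real_normK // num_real.
move: h2 ea eb; rewrite !expr2 => h2 ea eb.
nra.
Qed.

Lemma cone (R : realType) (d : nat) (u1 u2 a b1 b2 z : 'rV[R]_d)
  (r1 r2 t1 t2 de : R) :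
  edot u1 u1 = 1 -> edot u2 u2 = 1 -> `|edot u1 u2| < 1 ->
  a = b1 + r1 *: u1 -> a = b2 + r2 *: u2 ->
  edot (z - b1 - t1 *: u1) (z - b1 - t1 *: u1) <= t1 ^+ 2 * de ->
  edot (z - b2 - t2 *: u2) (z - b2 - t2 *: u2) <= t2 ^+ 2 * de ->
  0 <= de -> 8 * de <= 1 - `|edot u1 u2| ->
  (1 - `|edot u1 u2|) * edot (z - a) (z - a) <=
     (16 + 8 * (1 - `|edot u1 u2|)) * (r1 ^+ 2 + r2 ^+ 2) * de.
Proof.
move=> hu1 hu2 hc ha1 ha2.
set e1 := z - b1 - t1 *: u1; set e2 := z - b2 - t2 *: u2.
set c := edot u1 u2 => he1 he2 hde hsm.
set al := t1 - r1; set be := t2 - r2.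
have E1 : z - a = al *: u1 + e1.
  by rewrite ha1 /e1 /al; apply/rowP => i; rewrite !mxE; ring.
have E : al *: u1 - be *: u2 = e2 - e1.
  by apply/rowP => i; move/rowP: ha1 => /(_ i); move/rowP: ha2 => /(_ i);
    rewrite /e1 /e2 /al /be !mxE => h1 h2; lra.
have N1 : edot (al *: u1 - be *: u2) (al *: u1 - be *: u2) =
    al ^+ 2 + be ^+ 2 - 2 * al * be * c.
  rewrite !(edotDl, edotDr, edotNl, edotNr, edotZl, edotZr) hu1 hu2.
  rewrite (edotC u2 u1) -/c; ring.
have N2 := edot_sub_le e2 e1.
have N3 : edot (z - a) (z - a) <= 2 * al ^+ 2 + 2 * edot e1 e1.
  rewrite E1; have := edot_add_le (al *: u1) e1.
  rewrite edotZl edotZr hu1 mulr1 => h; apply: (le_trans h).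
  rewrite !expr2; nra.
rewrite -E N1 in N2.
have L := cross_le al be hc.
set g : R := `|c| in L hsm hc *.
have hg : 0 <= g by apply: normr_ge0.
have S1 : t1 ^+ 2 <= 2 * al ^+ 2 + 2 * r1 ^+ 2.
  have -> : t1 = al + r1 by rewrite /al; ring.
  rewrite -subr_ge0.
  have -> : 2 * al ^+ 2 + 2 * r1 ^+ 2 - (al + r1) ^+ 2 = (al - r1) ^+ 2 by ring.
  exact: sqr_ge0.
have S2 : t2 ^+ 2 <= 2 * be ^+ 2 + 2 * r2 ^+ 2.
  have -> : t2 = be + r2 by rewrite /be; ring.
  rewrite -subr_ge0.
  have -> : 2 * be ^+ 2 + 2 * r2 ^+ 2 - (be + r2) ^+ 2 = (be - r2) ^+ 2 by ring.
  exact: sqr_ge0.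
set S := t1 ^+ 2 + t2 ^+ 2.
set Q := r1 ^+ 2 + r2 ^+ 2.
set A := al ^+ 2 + be ^+ 2.
have hA : (1 - g) * A <= 2 * de * S.
  have L' : (1 - g) * (al ^+ 2 + be ^+ 2) <= al ^+ 2 + be ^+ 2 - 2 * al * be * c := L.
  rewrite /A /S; move: he1 he2 N2 L'; nra.
have hS : S <= 4 * Q.
  have hS0 : S <= 2 * Q + 2 * A by rewrite /S /Q /A; lra.
  have : (1 - g) * S <= 2 * (1 - g) * Q + 4 * de * S.
    by move: hS0 hA; nra.
  have hS0' : 0 <= S by rewrite /S; have := sqr_ge0 t1; have := sqr_ge0 t2; lra.
  move=> h; have : (1 - g) * S <= 2 * (1 - g) * Q + (1 - g) / 2 * S.
    by move: h hsm hS0'; nra.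
  move=> h'; have hh : 0 < 1 - g by lra.
  have : (1 - g) * (S - 4 * Q) <= 0 by move: h'; nra.
  by rewrite pmulr_rle0 // subr_le0.
have hQ : 0 <= Q by rewrite /Q; have := sqr_ge0 r1; have := sqr_ge0 r2; lra.
have hal : al ^+ 2 <= A by rewrite /A; have := sqr_ge0 be; lra.
have ht1 : t1 ^+ 2 <= S by rewrite /S; have := sqr_ge0 t2; lra.
have hh : 0 <= 1 - g by lra.
have := edot_ge0 e1 => he0.
have T1 : (1 - g) * edot (z - a) (z - a) <=
   2 * ((1 - g) * A) + 2 * (1 - g) * (t1 ^+ 2 * de).
  by move: N3 hal he1; nra.
have P : 0 <= (1 - g) * de by rewrite mulr_ge0.
have T2 : (1 - g) * edot (z - a) (z - a) <= 4 * de * S + 2 * (1 - g) * de * S.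
  by move: T1 hA ht1 P; nra.
suff : (1 - g) * edot (z - a) (z - a) <= (16 + 8 * (1 - g)) * Q * de by [].
move: T2 hS hde P; nra.
Qed.


Section Acos.
Variable R : realType.
Lemma acos_in (x : R) : -1 <= x <= 1 -> 0 <= acos x <= pi.
Proof. by move=> h; rewrite acos_ge0 // acos_lepi. Qed.

Lemma acos_le_inv (x y : R) : -1 <= x <= 1 -> -1 <= y <= 1 ->
  acos x <= acos y -> y <= x.
Proof.
move=> hx hy hle; rewrite leNgt; apply/negP => hxy.
have ex : cos (acos x) = x by rewrite acosK // in_itv.
have ey : cos (acos y) = y by rewrite acosK // in_itv.
have : cos (acos x) < cos (acos y) by rewrite ex ey.
rewrite ltr_cos ?in_itv ?acos_in // => h.
by move: (lt_le_trans h hle); rewrite ltxx.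
Qed.

Lemma acos_le_of (x e : R) : -1 <= x <= 1 -> 0 <= e <= pi ->
  cos e <= x -> acos x <= e.
Proof.
move=> hx he hc; rewrite leNgt; apply/negP => hlt.
have ex : cos (acos x) = x by rewrite acosK // in_itv.
have : cos (acos x) < cos e by rewrite ltr_cos ?in_itv ?acos_in.
by rewrite ex => h; move: (lt_le_trans h hc); rewrite ltxx.
Qed.
End Acos.

Section PhiLemmas.
Variables (R : realType) (X : Type) (d : nat) (f : X -> 'rV[R]_d).
Hypothesis f_inj : injective f.

Lemma Phi_unit x y : x <> y -> edot (Phi f (x, y)) (Phi f (x, y)) = 1.
Proof.
move=> xy; rewrite /Phi /=; apply: normalize_unit.
by rewrite subr_eq0; apply/eqP => /f_inj.
Qed.

Lemma Phi_swap x y : Phi f (y, x) = - Phi f (x, y).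
Proof. by rewrite /Phi /= -opprB enormN scalerN. Qed.

Lemma Phi_scale x y : f x - f y = enorm (f x - f y) *: Phi f (x, y).
Proof. exact: normalize_scale. Qed.
End PhiLemmas.


Lemma alpha0_close (R : realType) (X : topologicalType) (d : nat)
  (f : X -> 'rV[R]_d) (f_inj : injective f) :
  alpha f = 0%E -> forall de : R, 0 < de -> forall p, Conf2 X p ->
  exists U, [/\ open U, U p & forall q, U q -> Conf2 X q ->
     edot (Phi f q - Phi f p) (Phi f q - Phi f p) <= de].
Proof.
move=> a0 de de0 [x y] cp.
set de' := Num.min de 2.
have hde1 : de' <= de by rewrite /de' ge_min lexx.
have hde2 : de' <= 2 by rewrite /de' ge_min lexx orbT.
have hde0 : 0 < de' by rewrite /de' lt_min de0 ltr0n.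
set eps := acos (1 - de' / 2).
have eps0 : 0 < eps by apply: acos_gt0; apply/andP; split; lra.
have : (alpha f < eps%:E)%E by rewrite a0 lte_fin.
move/ereal_inf_lt => [_ [e [e0 He] <-]]; rewrite lte_fin => ee.
have [U [oU Up hdiam]] := He (x, y) cp.
exists U; split => // -[x' y'] Uq cq.
have h1 : ((geod (Phi f (x, y)) (Phi f (x', y')))%:E <=
    gdiam geod (Phi f @` (U `&` Conf2 X)))%E.
  apply: ereal_sup_ubound; exists (Phi f (x, y)); first by exists (x, y).
  by exists (Phi f (x', y')); first by exists (x', y').
have h2 : geod (Phi f (x, y)) (Phi f (x', y')) <= eps.
  by rewrite -lee_fin; apply: (le_trans h1); apply: (le_trans hdiam);
    rewrite lee_fin ltW.
have u1 := Phi_unit f_inj cp; have u2 := Phi_unit f_inj cq.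
have hb := edot_unit_bound u1 u2.
have h3 : 1 - de' / 2 <= edot (Phi f (x, y)) (Phi f (x', y')).
  apply: acos_le_inv h2 => //; apply/andP; split; lra.
rewrite edot_unit_dist // edotC; lra.
Qed.


Lemma edot_scale_diff (R : realType) d (v w u : 'rV[R]_d) (t : R) :
  v = t *: w -> edot (v - t *: u) (v - t *: u) = t ^+ 2 * edot (w - u) (w - u).
Proof.
move=> ->; rewrite -scalerBr edotZl edotZr; ring.
Qed.

Lemma sq_le_norm (R : realType) (v e : R) : 0 <= e -> v ^+ 2 <= e ^+ 2 -> `|v| <= e.
Proof.
move=> e0 h; rewrite leNgt; apply/negP => hv.
have n0 : 0 <= `|v| by [].
have : `|v| ^+ 2 = v ^+ 2 by rewrite real_normK // num_real.
move: h hv n0; rewrite !expr2 => h hv n0 hh; nra.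
Qed.

Section Cont.
Variables (R : realType) (X : topologicalType) (d : nat) (f : X -> 'rV[R]_d).
Hypothesis f_inj : injective f.
Hypothesis a0 : alpha f = 0%E.

Lemma near_close (x0 y : X) (de : R) : 0 < de -> x0 <> y ->
  \forall x \near x0, edot (f x - f y - enorm (f x - f y) *: Phi f (x0, y))
       (f x - f y - enorm (f x - f y) *: Phi f (x0, y))
    <= enorm (f x - f y) ^+ 2 * de.
Proof.
move=> de0 xy.
have [U [oU Up hU]] := alpha0_close f_inj a0 de0 (xy : Conf2 X (x0, y)).
have : nbhs (x0, y) U by apply: open_nbhs_nbhs.
case => -[A B] /= [nA nB] sub.
apply: filterS nA => x Ax.
have [->|xy'] := eqVneq x y.
  rewrite subrr /enorm edot0l sqrtr0 scale0r subrr edot0l expr0n /= mul0r.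
  exact: lexx.
rewrite (edot_scale_diff _ (Phi_scale f x y)).
rewrite ler_wpM2l ?sqr_ge0 //; apply: hU.
  by apply: sub; split => //; apply: nbhs_singleton.
by apply/eqP.
Qed.

Lemma cont_noncol (x0 y1 y2 : X) : x0 <> y1 -> x0 <> y2 ->
  `|edot (Phi f (x0, y1)) (Phi f (x0, y2))| < 1 -> f @ x0 --> f x0.
Proof.
move=> h1 h2 hc.
set u1 := Phi f (x0, y1); set u2 := Phi f (x0, y2).
set g : R := `|edot u1 u2| in hc.
set r1 := enorm (f x0 - f y1); set r2 := enorm (f x0 - f y2).
set Q := r1 ^+ 2 + r2 ^+ 2.
have hQ : 0 <= Q by rewrite /Q addr_ge0 ?sqr_ge0.
set K := (16 + 8 * (1 - g)) * Q + 1.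
have hg : 0 <= g by apply: normr_ge0.
have h16 : 0 <= 16 + 8 * (1 - g) by lra.
have hK : 0 < K by rewrite /K; have := mulr_ge0 h16 hQ; lra.
apply/cvg_ballP => eps eps0.
set e := eps / 2.
have e0 : 0 < e by rewrite /e; lra.
set de := Num.min ((1 - g) / 8) ((1 - g) * e ^+ 2 / K).
have de0 : 0 < de.
  rewrite /de lt_min; apply/andP; split; first by apply: divr_gt0; lra.
  by apply: divr_gt0 => //; apply: mulr_gt0; [lra | rewrite exprn_gt0].
have de1 : 8 * de <= 1 - g.
  have : de <= (1 - g) / 8 by rewrite /de ge_min lexx.
  lra.
have de2 : K * de <= (1 - g) * e ^+ 2.
  have : de <= (1 - g) * e ^+ 2 / K by rewrite /de ge_min lexx orbT.
  by rewrite ler_pdivlMr // mulrC.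
have n1 := near_close de0 h1.
have n2 := near_close de0 h2.
apply: filterS (filterI n1 n2) => x [hx1 hx2].
have U1 : edot u1 u1 = 1 by apply: Phi_unit.
have U2 : edot u2 u2 = 1 by apply: Phi_unit.
have A1 : f x0 = f y1 + r1 *: u1.
  by rewrite /r1 /u1 -Phi_scale addrC subrK.
have A2 : f x0 = f y2 + r2 *: u2.
  by rewrite /r2 /u2 -Phi_scale addrC subrK.
have := cone U1 U2 hc A1 A2 hx1 hx2 (ltW de0) de1.
rewrite -/g -/Q => hc2.
have hN : edot (f x - f x0) (f x - f x0) <= e ^+ 2.
  have hKQ : (16 + 8 * (1 - g)) * Q * de <= K * de.
    by rewrite ler_wpM2r ?ltW // /K; lra.
  have hh : (1 - g) * edot (f x - f x0) (f x - f x0) <= (1 - g) * e ^+ 2.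
    by apply: (le_trans hc2); apply: (le_trans hKQ).
  by rewrite ler_pM2l in hh; lra.
split => // i j; rewrite ord1 /ball /=.
have := entry_le (f x - f x0) j; rewrite !mxE => hj.
have : `|f x 0 j - f x0 0 j| <= e by apply: sq_le_norm; lra.
rewrite distrC /e; lra.
Qed.
End Cont.


Definition rowc (R : realType) (a b : R) : 'rV[R]_2 :=
  \row_(j < 2) (if j == ord0 then a else b).

Lemma rowcN (R : realType) (a b : R) : - rowc a b = rowc (- a) (- b).
Proof. by apply/rowP => j; rewrite !mxE; case: ifP. Qed.

Lemma rowc_sphere (R : realType) (t : R) : sphere R 2 (rowc (cos t) (sin t)).
Proof.
rewrite /sphere /enorm /edot /= !big_ord_recl big_ord0 !mxE /=.
by have := cos2Dsin2 t; rewrite !expr2 addr0 => ->; rewrite sqrtr1.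
Qed.

Lemma near_rowc (R : realType) (a b : R -> R) (t : R) (P : set 'rV[R]_2) :
  {for t, continuous a} -> {for t, continuous b} ->
  nbhs (rowc (a t) (b t)) P -> \forall s \near t, P (rowc (a s) (b s)).
Proof.
move=> ca cb /nbhs_ballP [e /= e0 sub].
have /cvg_ballP /(_ e e0) na := ca.
have /cvg_ballP /(_ e e0) nb := cb.
apply: filterS (filterI na nb) => s [h1 h2]; apply: sub; split => // i j.
by rewrite ord1 !mxE; case: ifP.
Qed.

Lemma psi_near (R : realType) (X : topologicalType) (psi : 'rV[R]_2 -> X)
  (psi_cont : {within sphere R 2, continuous psi})
  (w : R -> 'rV[R]_2) (t : R) :
  (forall s, sphere R 2 (w s)) ->
  (forall P, nbhs (w t) P -> \forall s \near t, P (w s)) ->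
  forall A, nbhs (psi (w t)) A -> \forall s \near t, A (psi (w s)).
Proof.
move=> hs hw A nA.
have := psi_cont (w t) A nA.
move=> hW.
have hW' : @nbhs_subspace _ (sphere R 2) (w t) (psi @^-1` A) := hW.
rewrite -nbhs_subspace_in in hW'; last exact: hs.
apply: filterS (hw _ hW') => s; apply; exact: hs.
Qed.


Lemma sign_eq (R : realType) (s s' : R) : s ^+ 2 = 1 -> s' ^+ 2 = 1 ->
  (s' - s) ^+ 2 <= 1 -> s' = s.
Proof.
move=> h h' hle.
have e1 : (s * s') ^+ 2 = 1 by rewrite exprMn h h' mulr1.
have e2 : 1 / 2 <= s * s' by move: hle h h'; rewrite !expr2 => *; nra.
have : (s * s' - 1) * (s * s' + 1) = 0.
  by move: e1; rewrite expr2 => e1; rewrite mulrDr mulr1 mulrBl mul1r e1; ring.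
move/eqP; rewrite mulf_eq0 => /orP[/eqP hh|/eqP hh]; last by lra.
have -> : s' = s * (s * s') by rewrite mulrA -expr2 h mul1r.
by rewrite (_ : s * s' = 1) ?mulr1 //; lra.
Qed.

Lemma edot_sub_scale (R : realType) d (P v : 'rV[R]_d) (k : R) :
  edot (P - k *: v) (P - k *: v) =
  edot P P - 2 * k * edot P v + k ^+ 2 * edot v v.
Proof.
rewrite !(edotDl, edotDr, edotNl, edotNr, edotZl, edotZr) (edotC v P); ring.
Qed.

Section Col.
Variables (R : realType) (X : topologicalType) (d : nat) (f : X -> 'rV[R]_d).
Hypothesis f_inj : injective f.
Variables (x0 y0 : X).
Hypothesis hy0 : x0 <> y0.
Hypothesis Hcol : forall y1 y2, x0 <> y1 -> x0 <> y2 ->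
  1 <= `|edot (Phi f (x0, y1)) (Phi f (x0, y2))|.

Let u := Phi f (x0, y0).
Let hu : edot u u = 1. Proof. exact: Phi_unit. Qed.

Lemma Phi_col y : x0 <> y -> exists c, Phi f (x0, y) = c *: u.
Proof.
move=> hy; set c := edot (Phi f (x0, y)) u.
exists c.
have hc : 1 <= `|c| by apply: Hcol.
have hc2 : 1 <= c ^+ 2.
  rewrite -real_normK ?num_real //.
  by have := normr_ge0 c; move: hc; rewrite expr2 => *; nra.
have hP := Phi_unit f_inj hy.
have E : edot (Phi f (x0, y) - c *: u) (Phi f (x0, y) - c *: u) = 1 - c ^+ 2.
  by rewrite edot_sub_scale hP hu -/c; ring.
have : edot (Phi f (x0, y) - c *: u) (Phi f (x0, y) - c *: u) = 0.
  by apply/eqP; rewrite eq_le edot_ge0 E andbT; lra.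
by move/edot_eq0/eqP; rewrite subr_eq0 => /eqP.
Qed.

Lemma line_rep y : exists s, f y - f x0 = s *: u.
Proof.
have [<-|hy] := pselect (x0 = y); first by exists 0; rewrite subrr scale0r.
have [c hc] := Phi_col hy.
exists (- (enorm (f x0 - f y) * c)).
by rewrite -opprB {1}(Phi_scale f x0 y) hc scalerA scaleNr.
Qed.

Lemma enorm_u : enorm u = 1.
Proof. by rewrite /enorm hu sqrtr1. Qed.

Lemma Phi_sign p q : p <> q -> exists s, s ^+ 2 = 1 /\ Phi f (p, q) = s *: u.
Proof.
move=> pq.
have [sp hp] := line_rep p; have [sq hq] := line_rep q.
have E : f p - f q = (sp - sq) *: u.
  by rewrite scalerBl -hp -hq opprB addrA subrK.
have s0 : sp - sq != 0.
  apply/negP => /eqP h0; apply: pq; apply: f_inj; apply/eqP.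
  by rewrite -subr_eq0 E h0 scale0r.
exists (`|sp - sq|^-1 * (sp - sq)); split.
  rewrite exprMn exprVn real_normK ?num_real // mulVf //.
  by rewrite sqrf_eq0.
by rewrite /Phi /= E enormZ enorm_u mulr1 scalerA.
Qed.

Lemma sign_close s s' : s ^+ 2 = 1 -> s' ^+ 2 = 1 ->
  edot (s' *: u - s *: u) (s' *: u - s *: u) <= 1 -> s' = s.
Proof.
move=> h hh; rewrite -scalerBl edotZl edotZr hu mulr1 -expr2.
exact: sign_eq.
Qed.

Hypothesis a0 : alpha f = 0%E.
Variable psi : 'rV[R]_2 -> X.
Hypothesis psi_cont : {within sphere R 2, continuous psi}.
Hypothesis psi_anti : forall x, sphere R 2 x -> psi x <> psi (- x).

Let c (t : R) := rowc (cos t) (sin t).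
Let K (t : R) := edot (Phi f (psi (c t), psi (- c t))) u.

Lemma K_sign t : exists s, s ^+ 2 = 1 /\ K t = s.
Proof.
have [s [hs hP]] := Phi_sign (psi_anti (rowc_sphere t)).
by exists s; split => //; rewrite /K hP edotZl hu mulr1.
Qed.

Lemma nearc t P : nbhs (c t) P -> \forall s \near t, P (c s).
Proof.
move=> hP; have cc : {for t, continuous (@cos R)} by apply: continuous_cos.
have cs : {for t, continuous (@sin R)} by apply: continuous_sin.
exact: (near_rowc cc cs hP).
Qed.

Lemma nearNc t P : nbhs (- c t) P -> \forall s \near t, P (- c s).
Proof.
rewrite /c rowcN => hP.
have cc : {for t, continuous (@cos R)} by apply: continuous_cos.
have cs : {for t, continuous (@sin R)} by apply: continuous_sin.
have := near_rowc (continuousN cc) (continuousN cs) hP.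
by apply: filterS => s; rewrite rowcN.
Qed.

Lemma sphereN v : sphere R 2 v -> sphere R 2 (- v).
Proof. by rewrite /sphere /= enormN. Qed.

Lemma K_cont : continuous K.
Proof.
move=> t; apply: (near_cst_continuous (K t)).
have cp : Conf2 X (psi (c t), psi (- c t)) by apply: psi_anti; apply: rowc_sphere.
have [U [oU Up hU]] := alpha0_close f_inj a0 ltr01 cp.
have : nbhs (psi (c t), psi (- c t)) U by apply: open_nbhs_nbhs.
case => -[A B] /= [nA nB] sub.
have hA := psi_near psi_cont (w := c) (@rowc_sphere R) (@nearc t) nA.
have hB := psi_near psi_cont (w := fun s => - c s)
  (fun s => sphereN (rowc_sphere s)) (@nearNc t) nB.
apply: filterS (filterI hA hB) => s [hsA hsB].
have cs : Conf2 X (psi (c s), psi (- c s)) by apply: psi_anti; apply: rowc_sphere.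
have hd := hU _ (sub (psi (c s), psi (- c s)) (conj hsA hsB)) cs.
have [st [hst Pt]] := Phi_sign cp.
have [ss [hss Ps]] := Phi_sign cs.
rewrite Pt Ps in hd.
by rewrite /K Pt Ps (sign_close hst hss hd).
Qed.

Lemma col_false : False.
Proof.
have hpi : c pi = - c 0.
  by rewrite /c rowcN cospi sinpi cos0 sin0 oppr0.
have Kpi : K pi = - K 0.
  by rewrite /K hpi opprK Phi_swap edotNl.
have [s0 [hs0 K0]] := K_sign 0.
have := @IVT R K 0 pi 0 (pi_ge0 R) (continuous_subspaceT K_cont).
case.
  rewrite Kpi K0; have [h|h] := lerP 0 s0.
    by apply/andP; split; [rewrite ge_min; apply/orP; right; lra
                          | rewrite le_max; apply/orP; left; lra].
  by apply/andP; split; [rewrite ge_min; apply/orP; left; lra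
                        | rewrite le_max; apply/orP; right; lra].
move=> t _ Kt; have [s [hs Ks]] := K_sign t.
by move: hs; rewrite -Ks Kt expr0n /= => /eqP; rewrite eq_sym oner_eq0.
Qed.
End Col.


Lemma normalize_close (R : realType) d (v v' : 'rV[R]_d) :
  v != 0 -> 4 * edot (v' - v) (v' - v) <= edot v v ->
  edot v v * edot ((enorm v')^-1 *: v' - (enorm v)^-1 *: v)
                  ((enorm v')^-1 *: v' - (enorm v)^-1 *: v)
   <= 2 * edot (v' - v) (v' - v).
Proof.
move=> v0 hD.
set D := edot (v' - v) (v' - v).
rewrite -/D in hD.
set n := enorm v; set n' := enorm v'.
have hn2 : n ^+ 2 = edot v v by rewrite enorm_sq.
have hn'2 : n' ^+ 2 = edot v' v' by rewrite enorm_sq.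
have hn0 : 0 < n.
  rewrite lt_def enorm_ge0 andbT; apply/eqP => /enorm_eq0 h.
  by rewrite h eqxx in v0.
have hn'0 : 0 <= n' by apply: enorm_ge0.
have hpar : edot v v <= 2 * edot v' v' + 2 * D.
  by have := edot_sub_le v' (v' - v); rewrite opprB addrC subrK.
have hn'n : n <= 2 * n'.
  have h4 : n ^+ 2 <= 4 * n' ^+ 2.
    by rewrite hn2 hn'2; lra.
  rewrite leNgt; apply/negP => h.
  have : (2 * n') * (2 * n') < n * n.
    apply: (le_lt_trans (y := (2 * n') * n)).
      by apply: ler_wpM2l; lra.
    by rewrite ltr_pM2r.
  move: h4; rewrite !expr2; lra.
have hn'pos : 0 < n' by lra.
set a := n'^-1; set b := n^-1.
have ha : a * n' = 1 by rewrite mulVf // gt_eqF.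
have hb : b * n = 1 by rewrite mulVf // gt_eqF.
set rho := edot v' v.
have ED : D = n' ^+ 2 - 2 * rho + n ^+ 2.
  rewrite /D hn2 hn'2 /rho !(edotDl, edotDr, edotNl, edotNr) (edotC v v'); ring.
have EN : edot (a *: v' - b *: v) (a *: v' - b *: v) =
   a ^+ 2 * n' ^+ 2 - 2 * a * b * rho + b ^+ 2 * n ^+ 2.
  rewrite hn2 hn'2 /rho !(edotDl, edotDr, edotNl, edotNr, edotZl, edotZr) (edotC v v').
  ring.
have EN2 : edot (a *: v' - b *: v) (a *: v' - b *: v) = 2 - 2 * a * b * rho.
  rewrite EN -!exprMn ha hb !expr1n; ring.
have E3 : n * n' * edot (a *: v' - b *: v) (a *: v' - b *: v) =
  D - (n - n') ^+ 2.
  rewrite EN2 ED.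
  have -> : n * n' * (2 - 2 * a * b * rho) = 2 * n * n' - 2 * (a * n') * (b * n) * rho
    by ring.
  rewrite ha hb; ring.
have hN0 := edot_ge0 (a *: v' - b *: v).
have E4 : n * n' * edot (a *: v' - b *: v) (a *: v' - b *: v) <= D.
  by rewrite E3; have := sqr_ge0 (n - n'); lra.
rewrite -hn2.
have : n * n <= 2 * (n * n') by nra.
move: E4 hN0; set N := edot _ _ => E4 hN0 hh.
have P : 0 <= (2 * (n * n') - n * n) * N by apply: mulr_ge0 => //; lra.
rewrite expr2; nra.
Qed.


Lemma near_diff_close (R : realType) (X : topologicalType) (d : nat)
  (f : X -> 'rV[R]_d) (fc : continuous f) (x y : X) (eta : R) : 0 < eta ->
  nbhs (x, y) [set q : X * X | edot (f q.1 - f q.2 - (f x - f y))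
                                    (f q.1 - f q.2 - (f x - f y)) <= eta].
Proof.
move=> eta0.
have hd : 0 < 4 * (d%:R + 1) :> R by rewrite mulr_gt0 // ltr_wpDl.
set e1 := Num.min 1 (eta / (4 * (d%:R + 1))).
have e10 : 0 < e1 by rewrite /e1 lt_min ltr01 divr_gt0.
have e11 : e1 <= 1 by rewrite /e1 ge_min lexx.
have e12 : e1 * (4 * (d%:R + 1)) <= eta.
  by rewrite -ler_pdivlMr // /e1 ge_min lexx orbT.
have /cvg_ballP /(_ e1 e10) nx := fc x.
have /cvg_ballP /(_ e1 e10) ny := fc y.
exists ([set x' | ball (f x) e1 (f x')], [set y' | ball (f y) e1 (f y')]).
  by split.
move=> [q1 q2] [/= hq1 hq2].
rewrite /edot; apply: (le_trans (y := \sum_(i < d) (4 * e1 ^+ 2))).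
  apply: ler_sum => j _.
  move: hq1 => [_ /(_ 0 j) h1]; move: hq2 => [_ /(_ 0 j) h2].
  rewrite /ball /= in h1 h2.
  rewrite !mxE.
  set a := f x 0 j - f q1 0 j; set b := f y 0 j - f q2 0 j.
  have -> : f q1 0 j - f q2 0 j - (f x 0 j - f y 0 j) = - a + b.
    by rewrite /a /b; ring.
  have hab : `|- a + b| < 2 * e1.
    by apply: (le_lt_trans (ler_normD _ _)); rewrite normrN; lra.
  have hn : `|- a + b| ^+ 2 = (- a + b) ^+ 2 by rewrite real_normK // num_real.
  have hn0 : 0 <= `|- a + b| by [].
  rewrite -expr2 -hn; move: hab hn0; rewrite !expr2 => *; nra.
rewrite sumr_const card_ord -mulr_natr.
have hd0 : 0 <= d%:R :> R by [].
have : e1 ^+ 2 <= e1 by rewrite expr2; nra.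
move=> h; move: e12; nra.
Qed.

Lemma cont_alpha0 (R : realType) (X : topologicalType) (d : nat)
  (f : X -> 'rV[R]_d) (f_inj : injective f) : continuous f -> alpha f = 0%E.
Proof.
move=> fc.
have E : forall e : R, 0 < e -> forall x, Conf2 X x -> exists U : set (X * X),
    [/\ open U, U x & (gdiam geod (Phi f @` (U `&` Conf2 X)) <= e%:E)%E].
  move=> e e0 [x y] cxy.
  set e' := Num.min e pi.
  have e'0 : 0 < e' by rewrite /e' lt_min e0 pi_gt0.
  have e'e : e' <= e by rewrite /e' ge_min lexx.
  have e'pi : e' <= pi by rewrite /e' ge_min lexx orbT.
  have ce : cos e' < 1.
    have := @ltr_cos R 0 e'; rewrite cos0 => ->; rewrite ?in_itv /= ?lexx ?pi_ge0 //.
    by rewrite ltW.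
  set de := (1 - cos e') / 2.
  have de0 : 0 < de by rewrite /de; lra.
  set v := f x - f y.
  have v0 : v != 0 by rewrite subr_eq0; apply/eqP => /f_inj.
  set n2 := edot v v.
  have n20 : 0 < n2.
    rewrite lt_def edot_ge0 andbT; apply/eqP => /edot_eq0 h.
    by rewrite h eqxx in v0.
  have eta0 : 0 < Num.min (n2 / 4) (de * n2 / 2).
    by rewrite lt_min !divr_gt0 // mulr_gt0.
  have := near_diff_close fc x y eta0.
  rewrite nbhsE => -[U [oU Ux] sU].
  exists U; split => //.
  have close : forall q, U q -> Conf2 X q ->
      edot (Phi f q - Phi f (x, y)) (Phi f q - Phi f (x, y)) <= de.
    move=> [q1 q2] Uq cq.
    have := sU _ Uq; rewrite /= -/v => hD.
    have hD1 : 4 * edot (f q1 - f q2 - v) (f q1 - f q2 - v) <= n2.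
      have : Num.min (n2 / 4) (de * n2 / 2) <= n2 / 4 by rewrite ge_min lexx.
      lra.
    have hD2 : 2 * edot (f q1 - f q2 - v) (f q1 - f q2 - v) <= de * n2.
      have : Num.min (n2 / 4) (de * n2 / 2) <= de * n2 / 2
        by rewrite ge_min lexx orbT.
      lra.
    have := normalize_close v0 hD1.
    rewrite /Phi /= -/v -/n2 => h.
    have : n2 * edot ((enorm (f q1 - f q2))^-1 *: (f q1 - f q2) - (enorm v)^-1 *: v)
      ((enorm (f q1 - f q2))^-1 *: (f q1 - f q2) - (enorm v)^-1 *: v) <= n2 * de.
      by apply: (le_trans h); lra.
    by rewrite ler_pM2l.
  apply: ge_ereal_sup => _ [a [q1 [Uq1 cq1] <-] [b [q2 [Uq2 cq2] <-] <-]].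
  rewrite lee_fin.
  have h1 := close q1 Uq1 cq1; have h2 := close q2 Uq2 cq2.
  case: q1 Uq1 cq1 h1 => q1 q1' Uq1 cq1 h1.
  case: q2 Uq2 cq2 h2 => q2 q2' Uq2 cq2 h2.
  have u1 := Phi_unit f_inj cq1; have u2 := Phi_unit f_inj cq2.
  have hb := edot_unit_bound u1 u2.
  have hsum := edot_sub_le (Phi f (q1, q1') - Phi f (x, y)) (Phi f (q2, q2') - Phi f (x, y)).
  rewrite (_ : Phi f (q1, q1') - Phi f (x, y) - (Phi f (q2, q2') - Phi f (x, y))
     = Phi f (q1, q1') - Phi f (q2, q2')) in hsum; last first.
    by rewrite opprB addrA subrK.
  rewrite edot_unit_dist // in hsum.
  apply: (le_trans _ e'e); rewrite /geod; apply: acos_le_of => //.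
    by rewrite (ltW e'0).
  rewrite /de in h1 h2; lra.
apply/eqP; rewrite eq_le; apply/andP; split.
  apply/lee_addgt0Pr => e e0; rewrite add0e.
  by apply: ereal_inf_lbound; exists e => //; split; [exact: ltW | exact: E].
apply/ereal_infP => _ [e [e0 _] <-]; by rewrite lee_fin.
Qed.

Theorem corollary3p8 (R : realType) (X : topologicalType) (d : nat)
  (f : X -> 'rV[R]_d) (f_inj : injective f)
  (psi : 'rV[R]_2 -> X)
  (psi_cont : {within sphere R 2, continuous psi})
  (psi_anti : forall x, sphere R 2 x -> psi x <> psi (- x)) :
  alpha f = 0%E <-> continuous f.
Proof.
split; last exact: cont_alpha0.
move=> a0 x0.
have [[y1 [y2 [h1 h2 hc]]]|hn] := pselect (exists y1 y2, [/\ x0 <> y1, x0 <> y2 &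
   `|edot (Phi f (x0, y1)) (Phi f (x0, y2))| < 1]).
  exact: (cont_noncol f_inj a0 h1 h2 hc).
have Hcol : forall y1 y2, x0 <> y1 -> x0 <> y2 ->
    1 <= `|edot (Phi f (x0, y1)) (Phi f (x0, y2))|.
  move=> y1 y2 h1 h2; rewrite leNgt; apply/negP => hc.
  by apply: hn; exists y1, y2.
have hp := psi_anti _ (rowc_sphere (0 : R)).
have [y0 hy0] : exists y0, x0 <> y0.
  have [e|ne] := pselect (x0 = psi (rowc (cos 0) (sin 0))).
    by exists (psi (- rowc (cos 0) (sin 0))); rewrite e.
  by exists (psi (rowc (cos 0) (sin 0))).
exfalso; exact: (col_false f_inj hy0 Hcol a0 psi_cont psi_anti).
Qed.
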